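(* Let $p_0,p_1,\dots,p_{n-1}$ ($n\ge 3$) be distinct points in $\mathbb{R}^2$, indices taken modulo $n$ (so $p_n=p_0$), such that $P=\bigcup_{i=1}^n I_i$, $I_i=[p_{i-1},p_i]$, is a simple closed $n$-gon. For $1\le i\le n$ let $u_i$ be the unit vector perpendicular to the line $\mathrm{aff}\, I_i$ oriented so that for every $b\in\mathrm{relint}\, I_i$ and all sufficiently small $\varepsilon>0$ one has $b+\varepsilon u_i\in\mathrm{ext}P$ and $b-\varepsilon u_i\in\mathrm{int}P$, and put $u_{i,i+1}=u_i+u_{i+1}$ (with $u_{n+1}=u_1$). Then for every sufficiently small $\varepsilon>0$ we have $p_i+\varepsilon u_{i,i+1}\in\mathrm{ext}P$ and $p_i-\varepsilon u_{i,i+1}\in\mathrm{int}P$ for all $1\le i\le n$.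
   Context: A simple closed $n$-gon is a polygon $P=\bigcup_{i=1}^n[p_{i-1},p_i]$ with $n$ distinct vertices $p_0,\dots,p_{n-1}$, $p_n=p_0$, whose edges intersect only in the common endpoints of consecutive edges ($[p_{i-1},p_i]\cap[p_i,p_{i+1}]=\{p_i\}$, $[p_0,p_1]\cap[p_{n-1},p_0]=\{p_0\}$, and non-consecutive edges are disjoint). $\mathbb{R}^2\setminus P$ has exactly two connected components; the bounded one is $\mathrm{int}P$ (interior), the unbounded one is $\mathrm{ext}P$ (exterior), and $P$ is the boundary of each. $\mathrm{relint}$ denotes relative interior, $\mathrm{aff}$ affine hull. *)

(* Defs.v *)
From HB Require Import structures.
From mathcomp Require Import all_boot all_order all_algebra.
From mathcomp Require Import all_classical all_reals all_analysis.
Set Implicit Arguments. Unset Strict Implicit. Unset Printing Implicit Defensive.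
Import Order.TTheory GRing.Theory Num.Theory.
Import numFieldNormedType.Exports.
Local Open Scope classical_set_scope.
Local Open Scope ring_scope.

Section Defs.
Variable R : realType.
Notation pt := (R * R)%type.

Definition padd (a b : pt) : pt := (a.1 + b.1, a.2 + b.2).
Definition psub (a b : pt) : pt := (a.1 - b.1, a.2 - b.2).
Definition pscale (t : R) (a : pt) : pt := (t * a.1, t * a.2).
Definition pdot (a b : pt) : R := a.1 * b.1 + a.2 * b.2.

Definition segment (a b : pt) : set pt :=
  [set padd a (pscale t (psub b a)) | t in [set t : R | 0 <= t <= 1]].
Definition relint_segment (a b : pt) : set pt :=
  [set padd a (pscale t (psub b a)) | t in [set t : R | 0 < t < 1]].

(* vertices p_0..p_{n-1}, indices modulo n; edge i (0 <= i < n) is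
   [p_i, p_{i+1}] (this is I_{i+1} in the paper's 1-based numbering) *)
Definition vtx (n : nat) (p : nat -> pt) (i : nat) : pt := p (i %% n)%N.
Definition edge (n : nat) (p : nat -> pt) (i : nat) : set pt :=
  segment (vtx n p i) (vtx n p i.+1).

Definition polygon (n : nat) (p : nat -> pt) : set pt :=
  \bigcup_(i in [set i : nat | (i < n)%N]) edge n p i.

Definition simple_polygon (n : nat) (p : nat -> pt) : Prop :=
  [/\ (3 <= n)%N,
      (forall i j, (i < n)%N -> (j < n)%N -> i <> j -> p i <> p j),
      (forall i, (i < n)%N ->
         edge n p i `&` edge n p i.+1 = [set vtx n p i.+1]) &
      (forall i j, (i < n)%N -> (j < n)%N -> i <> j ->
         j <> (i.+1 %% n)%N -> i <> (j.+1 %% n)%N ->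
         edge n p i `&` edge n p j = set0)].

Definition bounded_pt (A : set pt) : Prop :=
  exists M : R, forall y, A y -> `|y.1| <= M /\ `|y.2| <= M.

Definition interior_poly (P : set pt) : set pt :=
  [set x | ~ P x /\ bounded_pt (@connected_component (R * R)%type (~` P) x)].
Definition exterior_poly (P : set pt) : set pt :=
  [set x | ~ P x /\ ~ bounded_pt (@connected_component (R * R)%type (~` P) x)].

Definition outer_unit_normal (n : nat) (p : nat -> pt) (i : nat) (u : pt) : Prop :=
  [/\ pdot u u = 1,
      pdot u (psub (vtx n p i.+1) (vtx n p i)) = 0 &
      forall b, relint_segment (vtx n p i) (vtx n p i.+1) b ->
        exists2 e0 : R, 0 < e0 & forall e : R, 0 < e < e0 ->
          exterior_poly (polygon n p) (padd b (pscale e u)) /\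
          interior_poly (polygon n p) (psub b (pscale e u))].

End Defs.

(* Main.v *)
Require Import Defs.
From HB Require Import structures.
From mathcomp Require Import all_boot all_order all_algebra.
From mathcomp Require Import all_classical all_reals all_analysis.
From mathcomp Require Import ring lra.
Import Order.TTheory GRing.Theory Num.Theory.
Import numFieldNormedType.Exports.
Local Open Scope classical_set_scope.
Local Open Scope ring_scope.
Section T. Variable R : realType.
Implicit Types a b q : (R*R)%type.
Definition sf a b (t : R) := padd a (pscale t (psub b a)).
Lemma sf_cont a b : continuous (sf a b).
Proof.
move=> t; rewrite /continuous_at /sf /padd /pscale /psub /=.
apply: (@cvg_pair _ _ _ (nbhs t) (nbhs (a.1 + t * (b.1 - a.1))) (nbhs (a.2 + t * (b.2 - a.2)))) => /=.
  apply: cvgD; first exact: cvg_cst. apply: cvgMl; exact: cvg_id.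
apply: cvgD; first exact: cvg_cst. apply: cvgMl; exact: cvg_id.
Qed.
Lemma seg_eq a b : segment a b = sf a b @` `[0, 1].
Proof.
rewrite /segment /sf; apply/seteqP; split=> x [t ht <-]; exists t => //=;
 move: ht; rewrite /= in_itv /=; done.
Qed.
Lemma segment_closed a b : closed (segment a b).
Proof.
rewrite seg_eq; apply: compact_closed; first exact: norm_hausdorff.
apply: continuous_compact; last exact: segment_compact.
apply: continuous_subspaceT; exact: sf_cont.
Qed.
Lemma segment_conn a b : connected (segment a b).
Proof.
rewrite seg_eq; apply: connected_continuous_connected; first exact: segment_connected.
apply: continuous_subspaceT; exact: sf_cont.
Qed.
Lemma seg_start a b : segment a b a.
Proof. exists 0; first by rewrite /= lexx ler01. by rewrite /padd /pscale !mul0r !addr0; case: a. Qed.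
Lemma seg_end a b : segment a b b.
Proof. exists 1; first by rewrite /= lexx ler01. by rewrite /padd /pscale /psub !mul1r !subrKC; case: b. Qed.
Lemma same_comp (A : set (R*R)%type) a b : segment a b `<=` A ->
  connected_component A a = connected_component A b.
Proof.
move=> sA; apply: same_connected_component.
apply: (connected_component_max (seg_start a b) sA (segment_conn a b)).
exact: seg_end.
Qed.
Lemma near_notin (A : set (R*R)%type) q : closed A -> ~ A q ->
  exists2 d : R, 0 < d & forall y, `|y.1 - q.1| < d -> `|y.2 - q.2| < d -> ~ A y.
Proof.
move=> cA nAq.
have : nbhs q (~` A) by apply: open_nbhs_nbhs; split => //; exact: closed_openC.
move/nbhs_ballP=> [d d0 sub]; exists d => // y h1 h2; apply: sub.
by split => /=; rewrite /ball /= distrC.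
Qed.
End T.
Section G. Variable R : realType.
Lemma sq_sum0 (x y : R) : x*x + y*y = 0 -> x = 0 /\ y = 0.
Proof.
move=> h.
have hx : 0 <= x*x by rewrite -expr2 sqr_ge0.
have hy : 0 <= y*y by rewrite -expr2 sqr_ge0.
have ex : x*x = 0 by apply/eqP; rewrite eq_le hx andbT; lra.
have ey : y*y = 0 by apply/eqP; rewrite eq_le hy andbT; lra.
by move/eqP: ex; move/eqP: ey; rewrite !mulf_eq0 !orbb => /eqP -> /eqP ->.
Qed.
Lemma geoG (d1x d1y d2x d2y ux uy wx wy s : R) :
  ux*d1x + uy*d1y = 0 -> wx*d2x + wy*d2y = 0 ->
  ux*ux + uy*uy = 1 -> wx*wx + wy*wy = 1 ->
  (d1x*uy - d1y*ux)*(d2x*wy - d2y*wx) < 0 ->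
  (forall al be : R, 0 <= al -> 0 <= be -> al*d1x = be*d2x -> al*d1y = be*d2y -> al = 0) ->
  0 < s ->
  exists2 e1 : R, 0 < e1 & forall e, 0 < e < e1 -> forall t : R, 0 <= t <= 1 ->
    forall al : R, 0 <= al -> forall X Y : R,
    X = (1-t)*(e*(ux+wx)) + t*(s*d1x + e*ux) ->
    Y = (1-t)*(e*(uy+wy)) + t*(s*d1y + e*uy) ->
    ~ (X = al*d1x /\ Y = al*d1y) /\ ~ (X = al*d2x /\ Y = al*d2y).
Proof.
move=> hu hw nu nw hK hpar hs.
set A := 1 + (ux*wx + uy*wy).
have hA : 0 < A.
  rewrite ltNge; apply/negP => hA.
  have hsq : (ux+wx)*(ux+wx) + (uy+wy)*(uy+wy) = 2*A.
    rewrite /A; lra.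
  have sq1 : 0 <= (ux+wx)*(ux+wx) by rewrite -expr2 sqr_ge0.
  have sq2 : 0 <= (uy+wy)*(uy+wy) by rewrite -expr2 sqr_ge0.
  have ex : ux + wx = 0.
    have h0 : (ux+wx)*(ux+wx) = 0 by apply/eqP; rewrite eq_le; apply/andP; split; lra.
    by move/eqP: h0; rewrite mulf_eq0 orbb => /eqP.
  have ey : uy + wy = 0.
    have h0 : (uy+wy)*(uy+wy) = 0 by apply/eqP; rewrite eq_le; apply/andP; split; lra.
    by move/eqP: h0; rewrite mulf_eq0 orbb => /eqP.
  have ewx : wx = - ux by lra.
  have ewy : wy = - uy by lra.
  set a := d1y*ux - d1x*uy.
  set b := d2y*ux - d2x*uy.
  have hd1x : d1x = - a*uy.
    have : d1x + a*uy = ux*(ux*d1x+uy*d1y) + d1x*(1 - (ux*ux+uy*uy)) by rewrite /a; ring.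
    rewrite hu nu; lra.
  have hd1y : d1y = a*ux.
    have : d1y - a*ux = uy*(ux*d1x+uy*d1y) + d1y*(1 - (ux*ux+uy*uy)) by rewrite /a; ring.
    rewrite hu nu; lra.
  have hu2 : ux*d2x + uy*d2y = 0.
    have : wx*d2x + wy*d2y = - (ux*d2x + uy*d2y) by rewrite ewx ewy; ring.
    rewrite hw; lra.
  have hd2x : d2x = - b*uy.
    have : d2x + b*uy = ux*(ux*d2x+uy*d2y) + d2x*(1 - (ux*ux+uy*uy)) by rewrite /b; ring.
    rewrite hu2 nu; lra.
  have hd2y : d2y = b*ux.
    have : d2y - b*ux = uy*(ux*d2x+uy*d2y) + d2y*(1 - (ux*ux+uy*uy)) by rewrite /b; ring.
    rewrite hu2 nu; lra.
  have hab : 0 < a*b.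
    have : (d1x*uy - d1y*ux)*(d2x*wy - d2y*wx) = -(a*b) by rewrite ewx ewy /a /b; ring.
    lra.
  have hb2 : 0 <= b*b by rewrite -expr2 sqr_ge0.
  have ha2 : 0 <= a*a by rewrite -expr2 sqr_ge0.
  have q1 : (b*b)*d1x = (a*b)*d2x by rewrite hd1x hd2x; ring.
  have q2 : (b*b)*d1y = (a*b)*d2y by rewrite hd1y hd2y; ring.
  have := hpar _ _ hb2 (ltW hab) q1 q2.
  apply/eqP; rewrite mulf_neq0 //; apply/eqP; nra.
have hpos : forall e t : R, 0 < e -> 0 <= t <= 1 -> 0 < (1-t)*e*A + t*e.
  move=> e t he /andP[t0 t1].
  have h1 : 0 <= (1-t)*e by apply: mulr_ge0 => //; [lra|lra].
  have h2 : 0 <= t*e by apply: mulr_ge0 => //; lra.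
  have [hA1|hA1] := leP A 1.
    have : A * e <= (1-t)*e*A + t*e.
      have : t*e*A <= t*e by rewrite -[X in _ <= X]mulr1 ler_wpM2l.
      have -> : A*e = (1-t)*e*A + t*e*A by ring.
      lra.
    have : 0 < A*e by apply: mulr_gt0.
    lra.
  have : e <= (1-t)*e*A + t*e.
    have : (1-t)*e <= (1-t)*e*A by rewrite -[X in X <= _]mulr1 ler_wpM2l // ltW.
    lra.
  lra.
set k1 := d1x*uy - d1y*ux.
set k2 := d2x*wy - d2y*wx.
set c := d1x*d2y - d1y*d2x.
set D1 := d1x*d1x + d1y*d1y.
set D2 := d2x*d2x + d2y*d2y.
have id1 : D1 * (ux*d2x + uy*d2y) = k1 * c.
  have : D1 * (ux*d2x + uy*d2y) - k1*c = (ux*d1x+uy*d1y)*(d1x*d2x + d1y*d2y) by rewrite /D1 /k1 /c; ring.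
  rewrite hu mul0r; lra.
have id2 : D2 * (wx*d1x + wy*d1y) = - (k2 * c).
  have : D2 * (wx*d1x + wy*d1y) + k2*c = (wx*d2x+wy*d2y)*(d1x*d2x + d1y*d2y) by rewrite /D2 /k2 /c; ring.
  rewrite hw mul0r; lra.
have hD1 : 0 < D1.
  rewrite lt0r; apply/andP; split; last by rewrite /D1 -!expr2 addr_ge0 // sqr_ge0.
  apply/eqP => D0; have [z1 z2] := @sq_sum0 _ _ D0.
  by move: hK; rewrite z1 z2 !mul0r subrr mul0r ltxx.
have hD2 : 0 <= D2 by rewrite /D2 -!expr2 addr_ge0 // sqr_ge0.
have hKk : k1 * k2 < 0 by [].
clearbody k1 k2 c D1 D2.
have key : 0 < ux*d2x + uy*d2y -> 0 < wx*d1x + wy*d1y.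
  move=> h.
  have hkc : 0 < k1 * c by rewrite -id1; apply: mulr_gt0.
  have cn0 : c != 0 by apply/eqP => c0; move: hkc; rewrite c0 mulr0 ltxx.
  have hcc : 0 < c * c by rewrite lt0r mulf_neq0 //= -expr2 sqr_ge0.
  have : 0 < (k1 * c) * (D2 * (wx*d1x + wy*d1y)).
    rewrite id2.
    have -> : k1 * c * - (k2 * c) = - (k1*k2) * (c*c) by ring.
    apply: mulr_gt0 => //; lra.
  move=> hp.
  have : 0 < D2 * (wx*d1x + wy*d1y) by rewrite -(pmulr_rgt0 _ hkc).
  move=> hp2; rewrite ltNge; apply/negP => hle.
  by move: hp2; rewrite ltNge (mulr_ge0_le0 hD2 hle).
have ray1 : forall e t al X Y : R, 0 < e -> 0 <= t <= 1 -> 0 <= al ->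
    X = (1-t)*(e*(ux+wx)) + t*(s*d1x + e*ux) ->
    Y = (1-t)*(e*(uy+wy)) + t*(s*d1y + e*uy) ->
    X*ux + Y*uy = (1-t)*e*A + t*e.
  move=> e t al X Y _ _ _ -> ->.
  have -> : ((1 - t) * (e * (ux + wx)) + t * (s * d1x + e * ux)) * ux +
  ((1 - t) * (e * (uy + wy)) + t * (s * d1y + e * uy)) * uy =
   (1-t)*e*(ux*ux+uy*uy + (ux*wx+uy*wy)) + t*s*(ux*d1x+uy*d1y) + t*e*(ux*ux+uy*uy) by ring.
  by rewrite hu nu /A; ring.
have ray2 : forall e t al X Y : R, 0 < e -> 0 <= t <= 1 -> 0 <= al ->
    X = (1-t)*(e*(ux+wx)) + t*(s*d1x + e*ux) ->
    Y = (1-t)*(e*(uy+wy)) + t*(s*d1y + e*uy) ->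
    X*wx + Y*wy = (1-t)*e*A + t*s*(wx*d1x+wy*d1y) + t*e*(ux*wx+uy*wy).
  move=> e t al X Y _ _ _ -> ->.
  have -> : ((1 - t) * (e * (ux + wx)) + t * (s * d1x + e * ux)) * wx +
  ((1 - t) * (e * (uy + wy)) + t * (s * d1y + e * uy)) * wy =
   (1-t)*e*((ux*wx+uy*wy) + (wx*wx+wy*wy)) + t*s*(wx*d1x+wy*d1y) + t*e*(ux*wx+uy*wy) by ring.
  by rewrite nw /A; ring.
have common : forall e t al X Y : R, 0 < e -> 0 <= t <= 1 -> 0 <= al ->
    X = (1-t)*(e*(ux+wx)) + t*(s*d1x + e*ux) ->
    Y = (1-t)*(e*(uy+wy)) + t*(s*d1y + e*uy) ->
    ~ (X = al*d1x /\ Y = al*d1y) /\ (X = al*d2x /\ Y = al*d2y -> 0 < wx*d1x + wy*d1y /\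
       (1-t)*e*A + t*s*(wx*d1x+wy*d1y) + t*e*(ux*wx+uy*wy) = 0).
  move=> e t al X Y he ht hal hX hY.
  have r1 := ray1 e t al X Y he ht hal hX hY.
  have r2 := ray2 e t al X Y he ht hal hX hY.
  have p := hpos e t he ht.
  split.
    move=> [eX eY]; move: r1; rewrite eX eY.
    have -> : al * d1x * ux + al * d1y * uy = al * (ux*d1x+uy*d1y) by ring.
    rewrite hu mulr0; lra.
  move=> [eX eY]; split.
    apply: key; move: r1; rewrite eX eY.
    have -> : al * d2x * ux + al * d2y * uy = al * (ux*d2x+uy*d2y) by ring.
    move=> h; rewrite ltNge; apply/negP => hle.
    by move: p; rewrite -h ltNge (mulr_ge0_le0 hal hle).
  move: r2; rewrite eX eY.
  have -> : al * d2x * wx + al * d2y * wy = al * (wx*d2x+wy*d2y) by ring.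
  rewrite hw mulr0; lra.
have [dpos|dneg] := ltP 0 (wx*d1x + wy*d1y).
  exists (s * (wx*d1x + wy*d1y)); first exact: mulr_gt0.
  move=> e /andP[e0 e1] t ht al hal X Y hX hY.
  have [c1 c2] := common e t al X Y e0 ht hal hX hY.
  split => // /c2 [_].
  have hw1 : -1 < ux*wx + uy*wy by rewrite /A in hA; lra.
  move: ht => /andP[t0 t1].
  have q0 : 0 < e*(1 + (ux*wx + uy*wy)) by apply: mulr_gt0 => //; lra.
  have q : 0 < s * (wx * d1x + wy * d1y) + e*(ux*wx+uy*wy) by lra.
  have hA0 : 0 <= (1-t)*e*A by apply: mulr_ge0; [apply: mulr_ge0; lra|lra].
  have [->|tp] := eqVneq t 0.
    rewrite subr0 !mul0r mul1r !addr0 => h.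
    by have := mulr_gt0 e0 hA; rewrite h ltxx.
  have tq : 0 < t * (s * (wx * d1x + wy * d1y) + e*(ux*wx+uy*wy)).
    by apply: mulr_gt0 => //; rewrite lt0r tp.
  have -> : (1 - t) * e * A + t * s * (wx * d1x + wy * d1y) + t * e * (ux * wx + uy * wy) =
    (1-t)*e*A + t * (s * (wx * d1x + wy * d1y) + e*(ux*wx+uy*wy)) by ring.
  lra.
exists 1; first exact: ltr01.
move=> e /andP[e0 e1] t ht al hal X Y hX hY.
have [c1 c2] := common e t al X Y e0 ht hal hX hY.
by split => // /c2 [h _]; lra.
Qed.
Lemma conv_bnd (t A B M : R) : 0 <= t <= 1 -> `|A| < M -> `|B| < M -> `|(1-t)*A + t*B| < M.
Proof.
move=> /andP[t0 t1]; rewrite !ltr_norml => /andP[a1 a2] /andP[b1 b2].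
have [->|tp] := eqVneq t 0; first by rewrite subr0 mul1r mul0r addr0 a1 a2.
have tp' : 0 < t by rewrite lt0r tp.
have h1 : 0 <= (1-t)*(A+M) by apply: mulr_ge0; lra.
have h2 : 0 < t*(B+M) by apply: mulr_gt0; lra.
have h3 : 0 <= (1-t)*(M-A) by apply: mulr_ge0; lra.
have h4 : 0 < t*(M-B) by apply: mulr_gt0; lra.
have e1 : (1-t)*A + t*B + M = (1-t)*(A+M) + t*(B+M) by ring.
have e2 : M - ((1-t)*A + t*B) = (1-t)*(M-A) + t*(M-B) by ring.
apply/andP; split; lra.
Qed.
Lemma unit_bnd (x y : R) : x*x + y*y = 1 -> `|x| <= 1.
Proof. move=> h; have hy : 0 <= y*y by rewrite -expr2 sqr_ge0.
have hx : x*x <= 1 by lra.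
rewrite ler_norml; apply/andP; split; nra. Qed.
Lemma bnd (t e s d ux wx δ : R) : 0 <= t <= 1 -> 0 < e -> `|ux| <= 1 -> `|wx| <= 1 ->
  4*e < δ -> 4 * `|s*d| < δ -> `|(1-t)*(e*(ux+wx)) + t*(s*d + e*ux)| < δ.
Proof.
move=> ht e0; rewrite !ler_norml => /andP[u1 u2] /andP[w1 w2] he hs.
have : `|s*d| < δ/4 by lra.
rewrite ltr_norml => /andP[s1 s2].
have q1 : e*ux <= e by nra.
have q2 : - e <= e*ux by nra.
have q3 : e*wx <= e by nra.
have q4 : - e <= e*wx by nra.
apply: conv_bnd => //; rewrite ltr_norml ?mulrDr; apply/andP; split; lra.
Qed.
Lemma segG (P : set (R*R)%type) (v : (R*R)%type) (δ s d1x d1y d2x d2y ux uy wx wy : R) :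
  ux*d1x + uy*d1y = 0 -> wx*d2x + wy*d2y = 0 -> ux*ux + uy*uy = 1 -> wx*wx + wy*wy = 1 ->
  (d1x*uy - d1y*ux)*(d2x*wy - d2y*wx) < 0 ->
  (forall al be : R, 0 <= al -> 0 <= be -> al*d1x = be*d2x -> al*d1y = be*d2y -> al = 0) ->
  0 < s -> 0 < δ ->
  (forall X Y : R, (forall al : R, 0 <= al -> ~ (X = al*d1x /\ Y = al*d1y)) ->
     (forall al : R, 0 <= al -> ~ (X = al*d2x /\ Y = al*d2y)) -> `|X| < δ -> `|Y| < δ ->
     ~ P (v.1 + X, v.2 + Y)) ->
  4 * `|s*d1x| < δ -> 4 * `|s*d1y| < δ ->
  exists2 e1 : R, 0 < e1 & forall e, 0 < e < e1 ->
    segment (v.1 + e*(ux+wx), v.2 + e*(uy+wy)) (v.1 + (s*d1x + e*ux), v.2 + (s*d1y + e*uy)) `<=` ~` P.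
Proof.
move=> hu hw nu nw hK hpar hs hd notP b1 b2.
have [e1 e1p G] := @geoG _ _ _ _ _ _ _ _ _ hu hw nu nw hK hpar hs.
exists (Num.min e1 (δ/4)); first by rewrite lt_min e1p /= divr_gt0.
move=> e /andP[e0]; rewrite lt_min => /andP[ee1 ee2] y [t ht <-].
have hee : 0 < e < e1 by rewrite e0 ee1.
set X := (1-t)*(e*(ux+wx)) + t*(s*d1x + e*ux).
set Y := (1-t)*(e*(uy+wy)) + t*(s*d1y + e*uy).
have -> : padd (v.1 + e*(ux+wx), v.2 + e*(uy+wy)) (pscale t (psub (v.1 + (s*d1x + e*ux), v.2 + (s*d1y + e*uy)) (v.1 + e*(ux+wx), v.2 + e*(uy+wy)))) = (v.1 + X, v.2 + Y).
  rewrite /padd /pscale /psub /=; congr (_, _); rewrite /X /Y; ring.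
have he4 : 4 * e < δ by lra.
apply: notP.
- by move=> al hal; exact: (G e hee t ht al hal X Y erefl erefl).1.
- by move=> al hal; exact: (G e hee t ht al hal X Y erefl erefl).2.
- by apply: bnd => //; [exact: unit_bnd nu|exact: unit_bnd nw].
- apply: bnd => //; [apply: (@unit_bnd _ ux)|apply: (@unit_bnd _ wx)]; lra.
Qed.
End G.
Section M. Variable R : realType.
Lemma fin_min (n : nat) (Q : nat -> R -> Prop) :
  (forall i, (i < n)%N -> exists2 e0 : R, 0 < e0 & forall e, 0 < e < e0 -> Q i e) ->
  exists2 e0 : R, 0 < e0 & forall e, 0 < e < e0 -> forall i, (i < n)%N -> Q i e.
Proof.
elim: n => [|n IH] H.
  by exists 1 => // e _ i.
have [e1 e1p h1] := IH (fun i hi => H i (ltnW hi)).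
have [e2 e2p h2] := H n (ltnSn n).
exists (Num.min e1 e2); first by rewrite lt_min e1p e2p.
move=> e /andP[e0]; rewrite lt_min => /andP[ee1 ee2] i; rewrite ltnS leq_eqVlt => /orP[/eqP->|hi].
  by apply: h2; rewrite e0 ee2.
by apply: h1 => //; rewrite e0 ee1.
Qed.
Variables (n : nat) (p : nat -> (R*R)%type).
Lemma vtx_mod k : vtx n p (k %% n) = vtx n p k.
Proof. by rewrite /vtx modn_mod. Qed.
Lemma vtxS_mod k : vtx n p (k %% n).+1 = vtx n p k.+1.
Proof. by rewrite /vtx -addn1 modnDml addn1. Qed.
Lemma edge_mod k : edge n p (k %% n) = edge n p k.
Proof. by rewrite /edge vtx_mod vtxS_mod. Qed.
Lemma neq_mod k : (1 < n)%N -> (k < n)%N -> k <> (k.+1 %% n)%N.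
Proof.
move=> n1 kn; case: (ltngtP k.+1 n) => h.
- by rewrite modn_small // => /eqP; rewrite eqn_leq ltnn andbF.
- by move: kn; rewrite ltnNge -ltnS h.
- rewrite h modnn => k0; move: h; rewrite k0 => h; by move: n1; rewrite -h.
Qed.
End M.
Section L. Variable R : realType.
Implicit Types a v c U W : (R*R)%type.

Lemma pair_eq0 a v : a.1 - v.1 = 0 -> a.2 - v.2 = 0 -> a = v.
Proof. by move=> h1 h2; rewrite [a]surjective_pairing [v]surjective_pairing; congr (_, _); lra. Qed.

Lemma local_vertex (P : set (R*R)%type) a v c U W :
  segment a v `&` segment v c = [set v] -> a <> v -> v <> c ->
  (exists2 δ : R, 0 < δ & forall y, `|y.1 - v.1| < δ -> `|y.2 - v.2| < δ -> P y ->
       segment a v y \/ segment v c y) ->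
  pdot U U = 1 -> pdot U (psub v a) = 0 ->
  (forall b, relint_segment a v b -> exists2 e0 : R, 0 < e0 & forall e : R, 0 < e < e0 ->
     exterior_poly P (padd b (pscale e U)) /\ interior_poly P (psub b (pscale e U))) ->
  pdot W W = 1 -> pdot W (psub c v) = 0 ->
  (forall b, relint_segment v c b -> exists2 e0 : R, 0 < e0 & forall e : R, 0 < e < e0 ->
     exterior_poly P (padd b (pscale e W)) /\ interior_poly P (psub b (pscale e W))) ->
  exists2 e0 : R, 0 < e0 & forall e : R, 0 < e < e0 ->
    exterior_poly P (padd v (pscale e (padd U W))) /\
    interior_poly P (psub v (pscale e (padd U W))).
Proof.
move=> hcons anv vnc [δ δp loc] nU pU relU nW pW relW.
set d1x := a.1 - v.1. set d1y := a.2 - v.2. set d2x := c.1 - v.1. set d2y := c.2 - v.2.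
set ux := U.1. set uy := U.2. set wx := W.1. set wy := W.2.
have nu : ux*ux + uy*uy = 1 by exact: nU.
have nw : wx*wx + wy*wy = 1 by exact: nW.
have hu : ux*d1x + uy*d1y = 0.
  have -> : ux*d1x + uy*d1y = - pdot U (psub v a) by rewrite /pdot /psub /d1x /d1y /=; ring.
  by rewrite pU oppr0.
have hw : wx*d2x + wy*d2y = 0 by exact: pW.
have d1n : ~ (d1x = 0 /\ d1y = 0) by move=> [h1 h2]; apply: anv; apply: pair_eq0; [exact: h1|exact: h2].
have d2n : ~ (d2x = 0 /\ d2y = 0).
  by move=> [h1 h2]; apply: vnc; apply/esym; apply: pair_eq0; [exact: h1|exact: h2].
have F2 : forall al be : R, 0 <= al -> 0 <= be -> al*d1x = be*d2x -> al*d1y = be*d2y ->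
    al = 0 /\ be = 0.
  move=> al be hal hbe e1 e2.
  have [al0|aln] := eqVneq al 0.
    split => //; have [//|bn] := eqVneq be 0; exfalso; apply: d2n.
    move: e1 e2; rewrite al0 !mul0r => /esym/eqP e1 /esym/eqP e2.
    by move: e1 e2; rewrite !mulf_eq0 (negPf bn) /= => /eqP -> /eqP ->.
  have [be0|ben] := eqVneq be 0.
    exfalso; apply: d1n.
    move: e1 e2; rewrite be0 !mul0r => /eqP e1 /eqP e2.
    by move: e1 e2; rewrite !mulf_eq0 (negPf aln) /= => /eqP -> /eqP ->.
  exfalso.
  have alp : 0 < al by rewrite lt0r aln.
  have bep : 0 < be by rewrite lt0r ben.
  have sp : 0 < al + be by lra.
  set g := al / (al + be).
  have g0 : 0 < g by rewrite /g divr_gt0.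
  have g1 : g <= 1 by rewrite /g ler_pdivrMr // mul1r; lra.
  have gb : be / (al + be) = 1 - g.
    by rewrite /g; field; apply/eqP => h; move: sp; rewrite h ltxx.
  have hx : (segment a v `&` segment v c) (v.1 + g*d1x, v.2 + g*d1y).
    split.
      exists (1 - g); first by apply/andP; split; lra.
      by rewrite /padd /pscale /psub /d1x /d1y /=; congr (_, _); ring.
    exists (1 - g); first by apply/andP; split; lra.
    rewrite /padd /pscale /psub /=; congr (_, _).
      rewrite -gb mulrAC -/d2x -e1 mulrAC /g; ring.
    rewrite -gb mulrAC -/d2y -e2 mulrAC /g; ring.
  move: hx; rewrite hcons => /(congr1 (fun z => (z.1 - v.1, z.2 - v.2))) /= [h1 h2].
  apply: d1n; split.
    by apply/eqP; move: h1; rewrite addrAC subrr add0r => /eqP; rewrite mulf_eq0 gt_eqF.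
  by apply/eqP; move: h2; rewrite addrAC subrr add0r => /eqP; rewrite mulf_eq0 gt_eqF.
have F2a : forall al be : R, 0 <= al -> 0 <= be -> al*d1x = be*d2x -> al*d1y = be*d2y -> al = 0.
  by move=> al be h1 h2 h3 h4; case: (F2 al be h1 h2 h3 h4).
have F2b : forall al be : R, 0 <= al -> 0 <= be -> al*d2x = be*d1x -> al*d2y = be*d1y -> al = 0.
  by move=> al be h1 h2 h3 h4; case: (F2 be al h2 h1 (esym h3) (esym h4)).
have k1n : d1x*uy - d1y*ux != 0.
  apply/eqP => k0.
  have : (ux*d1x + uy*d1y)*(ux*d1x + uy*d1y) + (d1x*uy - d1y*ux)*(d1x*uy - d1y*ux) =
     (ux*ux+uy*uy)*(d1x*d1x + d1y*d1y) by ring.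
  rewrite hu k0 nu !mul0r add0r mul1r => /esym /(@sq_sum0 R) [h1 h2].
  by apply: d1n.
have k2n : d2x*wy - d2y*wx != 0.
  apply/eqP => k0.
  have : (wx*d2x + wy*d2y)*(wx*d2x + wy*d2y) + (d2x*wy - d2y*wx)*(d2x*wy - d2y*wx) =
     (wx*wx+wy*wy)*(d2x*d2x + d2y*d2y) by ring.
  rewrite hw k0 nw !mul0r add0r mul1r => /esym /(@sq_sum0 R) [h1 h2].
  by apply: d2n.
set M := `|d1x| + `|d1y| + `|d2x| + `|d2y|.
have M0 : 0 <= M by rewrite /M !addr_ge0.
set s := Num.min (1/2) (δ / (4*(M+1))).
have M1 : 0 < 4*(M+1) by lra.
have sp : 0 < s by rewrite /s lt_min divr_gt0 //= divr_gt0.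
have s1 : s < 1 by rewrite /s gt_min; apply/orP; left; lra.
have sM : s * (4*(M+1)) <= δ by rewrite -ler_pdivlMr // /s ge_min lexx orbT.
have sb : forall d : R, `|d| <= M -> 4 * `|s*d| < δ.
  move=> d hd; rewrite normrM (gtr0_norm sp).
  have : s * `|d| <= s * M by rewrite ler_wpM2l // ltW.
  nra.
have sb1 : 4 * `|s*d1x| < δ by apply: sb; rewrite /M; have := normr_ge0 d1y; have := normr_ge0 d2x; have := normr_ge0 d2y; lra.
have sb2 : 4 * `|s*d1y| < δ by apply: sb; rewrite /M; have := normr_ge0 d1x; have := normr_ge0 d2x; have := normr_ge0 d2y; lra.
have sb3 : 4 * `|s*d2x| < δ by apply: sb; rewrite /M; have := normr_ge0 d1y; have := normr_ge0 d1x; have := normr_ge0 d2y; lra.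
have sb4 : 4 * `|s*d2y| < δ by apply: sb; rewrite /M; have := normr_ge0 d1y; have := normr_ge0 d2x; have := normr_ge0 d1x; lra.
set b1 := padd a (pscale (1 - s) (psub v a)).
set b2 := padd v (pscale s (psub c v)).
have [e01 e01p H1] : exists2 e0 : R, 0 < e0 & forall e : R, 0 < e < e0 ->
     exterior_poly P (padd b1 (pscale e U)) /\ interior_poly P (psub b1 (pscale e U)).
  by apply: relU; exists (1 - s) => //=; apply/andP; split; lra.
have [e02 e02p H2] : exists2 e0 : R, 0 < e0 & forall e : R, 0 < e < e0 ->
     exterior_poly P (padd b2 (pscale e W)) /\ interior_poly P (psub b2 (pscale e W)).
  by apply: relW; exists s => //=; apply/andP; split; lra.
have notP : forall X Y : R, (forall al : R, 0 <= al -> ~ (X = al*d1x /\ Y = al*d1y)) ->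
     (forall al : R, 0 <= al -> ~ (X = al*d2x /\ Y = al*d2y)) -> `|X| < δ -> `|Y| < δ ->
     ~ P (v.1 + X, v.2 + Y).
  move=> X Y r1 r2 bX bY PXY.
  have h1 : `|(v.1 + X, v.2 + Y).1 - v.1| < δ by rewrite /= addrC addKr.
  have h2 : `|(v.1 + X, v.2 + Y).2 - v.2| < δ by rewrite /= addrC addKr.
  move: (loc _ h1 h2 PXY) => [[t ht] | [t ht]]; rewrite /padd /pscale /psub /= => -[e1 e2].
    apply: (r1 (1 - t)); first by move: ht => /andP[_ ?]; lra.
    by rewrite /d1x /d1y; split; lra.
  apply: (r2 t); first by move: ht => /andP[? _].
  by rewrite /d2x /d2y; split; lra.
have notP' : forall X Y : R, (forall al : R, 0 <= al -> ~ (X = al*d2x /\ Y = al*d2y)) ->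
     (forall al : R, 0 <= al -> ~ (X = al*d1x /\ Y = al*d1y)) -> `|X| < δ -> `|Y| < δ ->
     ~ P (v.1 + X, v.2 + Y).
  by move=> X Y r1 r2; apply: notP.
set K := (d1x*uy - d1y*ux)*(d2x*wy - d2y*wx).
have [Kn|Kp] : K < 0 \/ 0 < K.
  by move: (mulf_neq0 k1n k2n); rewrite -/K neq_lt => /orP[]; [left|right].
- have hu' : (-ux)*d1x + (-uy)*d1y = 0 by rewrite !mulNr -opprD hu oppr0.
  have hw' : (-wx)*d2x + (-wy)*d2y = 0 by rewrite !mulNr -opprD hw oppr0.
  have nu' : (-ux)*(-ux) + (-uy)*(-uy) = 1 by rewrite !mulrNN.
  have nw' : (-wx)*(-wx) + (-wy)*(-wy) = 1 by rewrite !mulrNN.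
  have Kn' : (d1x*(-uy) - d1y*(-ux))*(d2x*(-wy) - d2y*(-wx)) < 0.
    by have -> : (d1x*(-uy) - d1y*(-ux))*(d2x*(-wy) - d2y*(-wx)) = K by rewrite /K; ring.
  have [e1 e1p S1] := @segG R P v δ s d1x d1y d2x d2y ux uy wx wy hu hw nu nw Kn F2a sp δp notP sb1 sb2.
  have [e2 e2p S2] := @segG R P v δ s d1x d1y d2x d2y (-ux) (-uy) (-wx) (-wy) hu' hw' nu' nw' Kn' F2a sp δp notP sb1 sb2.
  exists (Num.min e01 (Num.min e1 e2)); first by rewrite !lt_min e01p e1p e2p.
  move=> e /andP[e0]; rewrite !lt_min => /andP[h01 /andP[h1 h2]].
  have [ext1 int1] := H1 e ltac:(by rewrite e0 h01).
  split.
    have Sg := S1 e ltac:(by rewrite e0 h1).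
    have EQ : (v.1 + (s*d1x + e*ux), v.2 + (s*d1y + e*uy)) = padd b1 (pscale e U).
      by rewrite /padd /pscale /psub /b1 /d1x /d1y /ux /uy /=; congr (_, _); ring.
    have QQ : (v.1 + e*(ux+wx), v.2 + e*(uy+wy)) = padd v (pscale e (padd U W)) by [].
    rewrite -QQ; split; first by apply: Sg; exact: seg_start.
    by rewrite (@same_comp R _ _ _ Sg) EQ; case: ext1.
  have Sg := S2 e ltac:(by rewrite e0 h2).
  have EQ : (v.1 + (s*d1x + e*(-ux)), v.2 + (s*d1y + e*(-uy))) = psub b1 (pscale e U).
    by rewrite /padd /pscale /psub /b1 /d1x /d1y /ux /uy /=; congr (_, _); ring.
  have QQ : (v.1 + e*(-ux + -wx), v.2 + e*(-uy + -wy)) = psub v (pscale e (padd U W)).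
    by rewrite /padd /pscale /psub /ux /uy /wx /wy /=; congr (_, _); ring.
  rewrite -QQ; split; first by apply: Sg; exact: seg_start.
  by rewrite (@same_comp R _ _ _ Sg) EQ; case: int1.
- exfalso.
  have hw' : (-wx)*d2x + (-wy)*d2y = 0 by rewrite !mulNr -opprD hw oppr0.
  have nw' : (-wx)*(-wx) + (-wy)*(-wy) = 1 by rewrite !mulrNN.
  have K1 : (d1x*uy - d1y*ux)*(d2x*(-wy) - d2y*(-wx)) < 0.
    have -> : (d1x*uy - d1y*ux)*(d2x*(-wy) - d2y*(-wx)) = - K by rewrite /K; ring.
    lra.
  have K2 : (d2x*(-wy) - d2y*(-wx))*(d1x*uy - d1y*ux) < 0.
    have -> : (d2x*(-wy) - d2y*(-wx))*(d1x*uy - d1y*ux) = - K by rewrite /K; ring.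
    lra.
  have [e1 e1p S1] := @segG R P v δ s d1x d1y d2x d2y ux uy (-wx) (-wy) hu hw' nu nw' K1 F2a sp δp notP sb1 sb2.
  have [e2 e2p S2] := @segG R P v δ s d2x d2y d1x d1y (-wx) (-wy) ux uy hw' hu nw' nu K2 F2b sp δp notP' sb3 sb4.
  set m := Num.min (Num.min e01 e02) (Num.min e1 e2).
  have mp : 0 < m by rewrite /m !lt_min e01p e02p e1p e2p.
  set e := m / 2.
  have e0 : 0 < e by rewrite /e divr_gt0.
  have em : e < m by rewrite /e; lra.
  move: em; rewrite /m !lt_min => /andP[/andP[h01 h02] /andP[h1 h2]].
  have [ext1 _] := H1 e ltac:(by rewrite e0 h01).
  have [_ int2] := H2 e ltac:(by rewrite e0 h02).
  have Sg1 := S1 e ltac:(by rewrite e0 h1).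
  have Sg2 := S2 e ltac:(by rewrite e0 h2).
  have EQ1 : (v.1 + (s*d1x + e*ux), v.2 + (s*d1y + e*uy)) = padd b1 (pscale e U).
    by rewrite /padd /pscale /psub /b1 /d1x /d1y /ux /uy /=; congr (_, _); ring.
  have EQ2 : (v.1 + (s*d2x + e*(-wx)), v.2 + (s*d2y + e*(-wy))) = psub b2 (pscale e W).
    by rewrite /padd /pscale /psub /b2 /d2x /d2y /wx /wy /=; congr (_, _); ring.
  have QQ : (v.1 + e*(ux + -wx), v.2 + e*(uy + -wy)) = (v.1 + e*(-wx + ux), v.2 + e*(-wy + uy)).
    by congr (_, _); ring.
  have C1 := @same_comp R _ _ _ Sg1. have C2 := @same_comp R _ _ _ Sg2.
  rewrite EQ1 in C1; rewrite EQ2 in C2; rewrite QQ in C1.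
  case: ext1 => _; case: int2 => _; by rewrite -C1 C2.
Qed.
End L.
Section Main. Variable R : realType.

Lemma notin_other (n : nat) (p : nat -> (R*R)%type) i k : simple_polygon n p ->
  (i < n)%N -> (k < n)%N -> k <> i -> k <> (i.+1 %% n)%N -> ~ edge n p k (vtx n p i.+1).
Proof.
case=> n3 hdist hcons hdisj hi hk ki kj hv.
have n1 : (1 < n)%N by apply: leq_trans n3.
have hj : (i.+1 %% n < n)%N by rewrite ltn_pmod // ltnW.
have ve : edge n p i (vtx n p i.+1) by exact: seg_end.
have [ik|nik] := eqVneq i (k.+1 %% n)%N.
  have : (edge n p k `&` edge n p k.+1) (vtx n p i.+1).
    by split => //; rewrite -(@edge_mod R n p k.+1) -ik.
  rewrite hcons // => /= h.
  move: h; rewrite -(@vtx_mod R n p k.+1) -ik /vtx (modn_small hi).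
  by move/esym; apply: hdist => //; exact: neq_mod.
have := hdisj i k hi hk (fun h => ki (esym h)) kj (fun h => negP nik (introT eqP h)).
by move=> h; have : (edge n p i `&` edge n p k) (vtx n p i.+1) by []; rewrite h.
Qed.

End Main.

Theorem lemma3p1 (R : realType) (n : nat) (p : nat -> (R * R)%type)
    (u : nat -> (R * R)%type) :
  simple_polygon n p ->
  (forall i, (i < n)%N -> outer_unit_normal n p i (u i)) ->
  exists2 e0 : R, 0 < e0 & forall e : R, 0 < e < e0 ->
    forall i, (i < n)%N ->
      exterior_poly (polygon n p)
        (padd (vtx n p i.+1) (pscale e (padd (u i) (u (i.+1 %% n)%N)))) /\
      interior_poly (polygon n p)
        (psub (vtx n p i.+1) (pscale e (padd (u i) (u (i.+1 %% n)%N)))).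
Proof.
move=> hs hn.
apply: fin_min => i hi.
have hs' := hs.
case: hs' => n3 hdist hcons hdisj.
have n1 : (1 < n)%N by apply: leq_trans n3.
have n0 : (0 < n)%N by apply: ltnW.
set j := (i.+1 %% n)%N.
have hj : (j < n)%N by rewrite ltn_pmod.
have vj : vtx n p j = vtx n p i.+1 by rewrite vtx_mod.
have cj : vtx n p j.+1 = vtx n p i.+2 by rewrite vtxS_mod.
have [nU pU relU] := hn i hi.
have [nW pW relW] := hn j hj.
rewrite vj cj in pW relW.
apply: local_vertex => //.
- exact: hcons.
- rewrite /vtx (modn_small hi); apply: hdist => //; exact: neq_mod.
- rewrite -vj -cj /vtx (modn_small hj); apply: hdist => //; first by rewrite ltn_pmod.
  exact: neq_mod.
- set v := vtx n p i.+1.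
  have [E0 E0p HE] : exists2 E0 : R, 0 < E0 & forall e, 0 < e < E0 -> forall k, (k < n)%N ->
      (k <> i -> k <> j -> forall y : (R*R)%type,
      `|y.1 - v.1| < e -> `|y.2 - v.2| < e -> ~ edge n p k y).
    apply: fin_min => k hk.
    case: (pselect (k <> i /\ k <> j)) => [[h1 h2]|h].
      have [d dp hd] := @near_notin R (edge n p k) v (@segment_closed R _ _) (@notin_other R n p i k hs hi hk h1 h2).
      exists d => // e /andP[e0 ed] _ _ y y1 y2; apply: hd.
        exact: lt_trans y1 ed.
      exact: lt_trans y2 ed.
    by exists 1 => // e _ h1 h2; exfalso; exact: h (conj h1 h2).
  have E2 : 0 < E0 / 2 by rewrite divr_gt0.
  exists (E0 / 2) => // y y1 y2 [k hk ek].
  have [ki|ki] := eqVneq k i; first by left; move: ek; rewrite ki.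
  have [kj|kj] := eqVneq k j.
    by right; move: ek; rewrite kj /j edge_mod.
  exfalso; apply: (HE (E0 / 2) _ k hk (elimN eqP ki) (elimN eqP kj) y y1 y2 ek).
  by rewrite E2 /=; lra.
- exact: pU.
- exact: relU.
- exact: pW.
- exact: relW.
Qed.
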